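(* Let $\Gamma$ be a weighted digraph with vertex set $\{1,\dots,n\}$, $n>1$, without loops and with strictly positive arc weights, with Laplacian matrix $L$, in-forest dimension $d$, and let $\tilde J=\sigma_{n-d}^{-1}Q_{n-d}$. Then $\tilde J=I-LL^{\#}$, where $L^{\#}$ is the group inverse of $L$.
   Context: $W=(w_{ij})$ is the matrix of arc weights ($w_{ij}>0$ iff there is an arc $i\to j$, else $0$). The Laplacian $L=(\ell_{ij})$: $\ell_{ij}=-w_{ij}$ for $j\ne i$, $\ell_{ii}=\sum_{k\ne i}w_{ik}$. The weight of a subgraph is the product of its arc weights (1 if no arcs); the weight of a set of subgraphs is the sum of their weights. A converging tree is a weakly connected digraph with one vertex (the root) of outdegree 0 and all others of outdegree 1; an in-forest is a spanning subgraph of $\Gamma$ whose weak components are converging trees. The in-forest dimension $d$ is the minimal number of trees in an in-forest (so in-forests have at most $n-d$ arcs). $\sigma_k$ is the total weight of in-forests with $k$ arcs; $Q_k=(q^k_{ij})$ with $q^k_{ij}$ the total weight of in-forests with $k$ arcs in which $i$ lies in a tree rooted at $j$. For a square matrix $A$ of index at most 1 (the index being the least $k\ge0$ with $\operatorname{rank}A^{k+1}=\operatorname{rank}A^k$), the group inverse $A^{\#}$ is the unique matrix $X$ with $AXA=A$, $XAX=X$, $AX=XA$. *)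

(* Defs.v *)
From HB Require Import structures.
From mathcomp Require Import all_boot all_order all_algebra.
Set Implicit Arguments. Unset Strict Implicit. Unset Printing Implicit Defensive.
Import Order.TTheory GRing.Theory Num.Theory.
Local Open Scope ring_scope.

Section Forests.
Variables (R : realFieldType) (n : nat) (W : 'M[R]_n).

Definition arcs : {set 'I_n * 'I_n} := [set a | W a.1 a.2 != 0].

Definition frel_of (F : {set 'I_n * 'I_n}) : rel 'I_n := fun i j => (i, j) \in F.

Definition outdeg (F : {set 'I_n * 'I_n}) (v : 'I_n) : nat :=
  #|[set a in F | a.1 == v]|.

(* spanning subgraph (given by its arc set) which is an in-forest:
   outdegrees <= 1 and no directed cycle; weak components are then
   converging trees, whose roots are the vertices of outdegree 0 *)
Definition inforest (F : {set 'I_n * 'I_n}) : bool :=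
  [&& F \subset arcs,
      [forall v, outdeg F v <= 1]%N &
      [forall a in F, ~~ connect (frel_of F) a.2 a.1]].

Definition ntrees (F : {set 'I_n * 'I_n}) : nat := #|[set v | outdeg F v == 0%N]|.

Definition inforest_dim : nat :=
  \big[minn/n]_(F : {set 'I_n * 'I_n} | inforest F) ntrees F.

Definition fweight (F : {set 'I_n * 'I_n}) : R := \prod_(a in F) W a.1 a.2.

Definition sigma (k : nat) : R :=
  \sum_(F : {set 'I_n * 'I_n} | inforest F && (#|F| == k)) fweight F.

Definition in_tree_rooted (F : {set 'I_n * 'I_n}) (i j : 'I_n) : bool :=
  (outdeg F j == 0%N) && connect (frel_of F) i j.

Definition Qmx (k : nat) : 'M[R]_n :=
  \matrix_(i, j) \sum_(F : {set 'I_n * 'I_n} |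
                        [&& inforest F, #|F| == k & in_tree_rooted F i j]) fweight F.

Definition laplacian : 'M[R]_n :=
  \matrix_(i, j) if i == j then \sum_(k | k != i) W i k else - W i j.

End Forests.

Definition is_group_inverse (R : ringType) (n : nat) (A X : 'M[R]_n) : Prop :=
  [/\ A *m X *m A = A, X *m A *m X = X & A *m X = X *m A].

(* Main.v *)
Require Import Defs.
From mathcomp Require Import all_boot all_order all_algebra.
From mathcomp Require Import ring zify.
Import GRing.Theory Num.Theory.
Local Open Scope ring_scope.

Module Aux.
Import Order.TTheory.
Set Implicit Arguments. Unset Strict Implicit. Unset Printing Implicit Defensive.

Section Graph.
Variables (R : realFieldType) (n : nat) (W : 'M[R]_n).
Local Notation T := 'I_n.
Local Notation forest := (inforest W).
Local Notation e := (@frel_of n).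
Local Notation sink F v := (outdeg F v == 0%N).
Local Notation itr := (@in_tree_rooted n).
Implicit Types (F G H : {set T * T}) (x y z v a b i j l : T).

Lemma conn_ind (r : rel T) (P : T -> Prop) x y :
  P x -> (forall a b, P a -> r a b -> P b) -> connect r x y -> P y.
Proof.
move=> Px st /connectP [p pth ->]; elim: p x Px pth => [|z p IH] x Px //=.
by case/andP=> rxz pth; apply: (IH z) => //; apply: st rxz.
Qed.


Lemma sinkP F v : reflect (forall y, (v, y) \notin F) (sink F v).
Proof.
rewrite /outdeg cards_eq0; apply: (iffP eqP) => [H y|H].
  apply/negP => Hy; have : (v, y) \in [set a in F | a.1 == v] by rewrite inE Hy /=.
  by rewrite H inE.
apply/setP => -[a b]; rewrite !inE /=; apply/negP => /andP [Hab /eqP Ea].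
by move: (H b); rewrite -Ea Hab.
Qed.

Lemma sink_conn F x y : sink F x -> connect (e F) x y -> y = x.
Proof.
move/sinkP=> Hs /connectP [[|z p] //= /andP [Hxz _] _].
by move: (Hs z); rewrite /frel_of in Hxz; rewrite Hxz.
Qed.

Lemma forest_func F x y z : forest F -> (x, y) \in F -> (x, z) \in F -> y = z.
Proof.
case/and3P=> _ /forallP Hd _ Hy Hz.
have /card_le1_eqP Hc := Hd x.
have Hy' : (x, y) \in [set a in F | a.1 == x] by rewrite inE Hy /=.
have Hz' : (x, z) \in [set a in F | a.1 == x] by rewrite inE Hz /=.
by have := Hc _ _ Hy' Hz'; case.
Qed.

Lemma forest_acyc F x y : forest F -> (x, y) \in F -> ~~ connect (e F) y x.
Proof. by case/and3P=> _ _ /forallP H Hxy; have := H (x, y); rewrite Hxy. Qed.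

Lemma forest_arc F x y : forest F -> (x, y) \in F -> W x y != 0.
Proof. by case/and3P=> /subsetP H _ _ /H; rewrite inE. Qed.

Lemma conn_comp F x a b : forest F -> connect (e F) x a -> connect (e F) x b ->
  connect (e F) a b || connect (e F) b a.
Proof.
move=> fF /connectP [p pth ->]; elim: p x pth => [|z p IH] x /=.
  by move=> _ ->.
case/andP=> Hxz pth /connectP [[|z' q] /= ].
  move=> _ ->; apply/orP; right; apply/connectP; exists (z :: p) => //=.
  by rewrite Hxz.
case/andP=> Hxz' qth Hb; apply: (IH z pth).
have Ez : z' = z by apply: (forest_func fF Hxz' Hxz).
by apply/connectP; exists q; rewrite -?Ez.
Qed.

Lemma root_uniq F x j1 j2 : forest F -> itr F x j1 -> itr F x j2 -> j1 = j2.
Proof.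
move=> fF /andP [s1 c1] /andP [s2 c2].
case/orP: (conn_comp fF c1 c2) => H.
  by rewrite (sink_conn s1 H).
by rewrite (sink_conn s2 H).
Qed.

Lemma root_exists F x : forest F -> exists j, itr F x j.
Proof.
move=> fF.
have Px : connect (e F) x x by apply: connect0.
case: (arg_minnP (fun j => #|[set y | connect (e F) j y]|) Px) => j Hxj Hmin.
exists j; rewrite /in_tree_rooted Hxj andbT.
apply/sinkP => y; apply/negP => Hjy.
have Hxy : connect (e F) x y by apply: connect_trans Hxj (connect1 _).
have := Hmin y Hxy; rewrite leqNgt => /negP; apply; apply: proper_card.
apply/properP; split.
  apply/subsetP => z; rewrite !inE => Hz.
  by apply: connect_trans (connect1 _) Hz.
exists j; rewrite !inE ?connect0 //.
by apply: (forest_acyc fF Hjy).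
Qed.

Lemma itr_sink F i j : sink F i -> itr F i j = (i == j).
Proof.
move=> Hs; rewrite /in_tree_rooted.
case: (i =P j) => [<-|Hne]; first by rewrite Hs connect0.
apply/negbTE/negP => /andP [_ /(sink_conn Hs) E]; exact: Hne (esym E).
Qed.


Section Ext.
Variables (H : {set T * T}) (i l : T).
Hypotheses (fH : forest H) (sH : sink H i) (Wil : W i l != 0)
  (nc : ~~ connect (e H) l i).
Let G := (i, l) |: H.

Lemma ext_notin : (i, l) \notin H.
Proof. by move/sinkP: sH. Qed.

Lemma ext_conn v y : connect (e G) v y =
  connect (e H) v y || (connect (e H) v i && connect (e H) l y).
Proof.
apply/idP/idP.
  apply: (conn_ind (P := fun y => connect (e H) v y || (connect (e H) v i && connect (e H) l y))).
    by rewrite connect0.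
  move=> a b /orP Hab; rewrite /frel_of /G in_setU1 => /orP [/eqP [Ea Eb]|Hb].
    subst a b; case: Hab => [->|/andP [H1 H2]]; first by rewrite connect0 orbT.
    by rewrite (negbTE nc) in H2.
  case: Hab => [Ha|/andP [H1 H2]].
    by rewrite (connect_trans Ha (connect1 Hb)).
  by rewrite H1 (connect_trans H2 (connect1 Hb)) orbT.
have sub : subrel (e H) (connect (e G)).
  by move=> a b Hab; apply: connect1; rewrite /frel_of /G in_setU1; apply/orP; right.
case/orP => [/(connect_sub sub) //|/andP [H1 H2]].
apply: connect_trans (connect_sub sub H1) _.
apply: connect_trans (connect1 _) (connect_sub sub H2).
by rewrite /frel_of /G in_setU1 eqxx.
Qed.

Lemma ext_outset v : [set a in G | a.1 == v] =
  if v == i then [set (i, l)] else [set a in H | a.1 == v].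
Proof.
apply/setP => -[a b]; rewrite /G !inE /=.
case: (v =P i) => [->|Hv]; rewrite !inE.
  case: (a =P i) => [->|Ha]; last by rewrite !andbF; case: eqP => // -[].
  by rewrite !andbT; move/sinkP: sH => /(_ b) /negbTE ->; rewrite orbF.
rewrite /=; case: (a =P v) => [Ea|Ha]; last by rewrite !andbF.
subst a; rewrite !andbT; case: eqP => //= -[Ea _]; by case: Hv.
Qed.

Lemma ext_sink v : sink G v = sink H v && (v != i).
Proof.
rewrite /outdeg ext_outset; case: (v =P i) => [->|_]; last by rewrite andbT.
by rewrite cards1 andbF.
Qed.

Lemma ext_forest : forest G.
Proof.
case/and3P: fH => sub /forallP od /forallP ac.
apply/and3P; split.
- apply/subsetP => a; rewrite /G in_setU1 => /orP [/eqP ->|]; first by rewrite inE.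
  by apply: (subsetP sub).
- apply/forallP => v; rewrite /outdeg ext_outset; case: (v =P i) => _.
    by rewrite cards1.
  exact: od.
- apply/forallP => -[a b]; apply/implyP; rewrite /G in_setU1 /= => /orP [/eqP [-> ->]|Hab].
    by rewrite ext_conn (negbTE nc).
  rewrite ext_conn negb_or (implyP (ac (a, b)) Hab) /=.
  apply/negP => /andP [H1 H2]; move/negP: nc; apply.
  by apply: connect_trans (connect_trans H2 (connect1 Hab)) H1.
Qed.

Lemma ext_itr v j : itr G v j =
  if connect (e H) v i then itr H l j else itr H v j.
Proof.
rewrite /in_tree_rooted ext_sink ext_conn.
case Hvi: (connect (e H) v i) => /=; rewrite ?andbF ?orbF.
  apply/idP/idP.
    case/andP => /andP [sj nji] /orP [Hvj|//]; last by rewrite sj.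
    case/orP: (conn_comp fH Hvi Hvj) => Hc.
      by move: nji; rewrite (sink_conn sH Hc) eqxx.
    by move: nji; rewrite (sink_conn sj Hc) eqxx.
  case/andP => sj Hlj; rewrite sj Hlj orbT andbT /=.
  by apply/eqP => E; move: nc; rewrite -E Hlj.
apply/idP/idP; first by case/andP => /andP [-> _] ->.
case/andP => sj Hvj; rewrite sj Hvj /= andbT.
by apply/eqP => E; move: Hvi; rewrite -E Hvj.
Qed.

Lemma ext_card : #|G| = #|H|.+1.
Proof. by rewrite /G cardsU1 ext_notin. Qed.

Lemma ext_weight : fweight W G = W i l * fweight W H.
Proof. by rewrite /fweight /G big_setU1 //= ext_notin. Qed.

End Ext.

Section Rem.
Variables (G : {set T * T}) (i l : T).
Hypotheses (fG : forest G) (Gil : (i, l) \in G).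
Let H := G :\ (i, l).

Lemma rem_forest : forest H.
Proof.
case/and3P: fG => sub /forallP od /forallP ac.
have sHG : H \subset G by apply: subD1set.
have sub' : subrel (e H) (connect (e G)).
  by move=> a b Hab; apply: connect1; apply: (subsetP sHG).
apply/and3P; split.
- exact: subset_trans sHG sub.
- apply/forallP => v; apply: leq_trans (od v); apply: subset_leq_card.
  by apply/subsetP => a; rewrite !inE => /andP [/andP [_ ->] ->].
- apply/forallP => a; apply/implyP => Ha; apply/negP => /(connect_sub sub').
  by apply/negP; apply: (implyP (ac a)); apply: (subsetP sHG).
Qed.

Lemma rem_sink : sink H i.
Proof.
apply/sinkP => y; rewrite /H !inE; apply/negP => /andP [Hne Hy].
by move: Hne; rewrite (forest_func fG Hy Gil) eqxx.
Qed.

Lemma rem_nc : ~~ connect (e H) l i.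
Proof.
apply/negP => Hc; move: (forest_acyc fG Gil); rewrite (connect_sub _ Hc) //.
by move=> a b Hab; apply: connect1; move: Hab; rewrite /frel_of /H !inE => /andP [].
Qed.

Lemma rem_arc : W i l != 0.
Proof. exact: forest_arc fG Gil. Qed.

Lemma rem_K : (i, l) |: H = G.
Proof. exact: setD1K. Qed.

End Rem.


Definition same_root F x y := [forall j, itr F x j == itr F y j].
Definition out F x := odflt x [pick y | (x, y) \in F].

Lemma out_spec F x y : forest F -> (x, y) \in F -> out F x = y.
Proof.
move=> fF Hxy; rewrite /out; case: pickP => [z Hz /=|/(_ y)]; last by rewrite Hxy.
exact: forest_func fF Hz Hxy.
Qed.

Lemma out_in F x : ~~ sink F x -> (x, out F x) \in F.
Proof.
move=> ns; rewrite /out; case: pickP => [z Hz //|H0].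
by case/negP: ns; apply/sinkP => y; rewrite H0.
Qed.

Lemma ns_nc H x l : forest H -> sink H x -> ~~ same_root H x l -> ~~ connect (e H) l x.
Proof.
move=> fH sH /forallP ns; apply/negP => Hc; apply: ns => j.
rewrite itr_sink //; case: (x =P j) => [<-|Hne].
  by rewrite /in_tree_rooted sH Hc.
rewrite eq_sym eqbF_neg; apply/negP => Hl; apply: Hne; apply: (root_uniq fH _ Hl).
by rewrite /in_tree_rooted sH Hc.
Qed.

Lemma rem_ns G x o : forest G -> (x, o) \in G -> ~~ same_root (G :\ (x, o)) x o.
Proof.
move=> fG Hin; apply/negP => /forallP /(_ x) /eqP.
rewrite itr_sink ?rem_sink // eqxx /in_tree_rooted => /esym /andP [_ Hc].
by move: (rem_nc fG Hin); rewrite Hc.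
Qed.

End Graph.

Lemma sum_invol (R : numFieldType) (I : finType) (P : pred I) (f : I -> R) (phi : I -> I) :
  (forall x, P x -> P (phi x)) -> (forall x, P x -> phi (phi x) = x) ->
  (forall x, P x -> f (phi x) = - f x) -> \sum_(x | P x) f x = 0.
Proof.
move=> HP Hinv Hf.
pose psi x := if P x then phi x else x.
have psiK : involutive psi.
  by move=> x; rewrite /psi; case Px: (P x); rewrite ?HP ?Hinv ?Px.
have E : \sum_(x | P x) f x = \sum_(x | P x) f (psi x).
  rewrite (reindex_inj (inv_inj psiK)) /=; apply: eq_bigl => x.
  by rewrite /psi; case Px: (P x); rewrite ?HP ?Px.
have E2 : \sum_(x | P x) f (psi x) = - \sum_(x | P x) f x.
  rewrite -sumrN; apply: eq_bigr => x Px; by rewrite /psi Px Hf.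
have : (\sum_(x | P x) f x) *+ 2 == 0.
  by rewrite mulr2n {1}E E2 addNr.
by rewrite mulrn_eq0 /= => /eqP.
Qed.

Section Rec.
Variables (R : realFieldType) (n : nat) (W : 'M[R]_n).
Local Notation T := 'I_n.
Local Notation forest := (inforest W).
Local Notation e := (@frel_of n).
Local Notation sink F v := (outdeg F v == 0%N).
Local Notation itr := (@in_tree_rooted n).
Implicit Types (F G H : {set T * T}) (x y z v a b : T).

Lemma QmxE k x y : Qmx W k x y =
  \sum_(F | forest F && (#|F| == k)) fweight W F * (itr F x y)%:R.
Proof.
rewrite mxE (eq_bigl (fun F => (forest F && (#|F| == k)) && itr F x y)); last first.
  by move=> F; rewrite andbA.
rewrite big_mkcondr /=; apply: eq_bigr => F _; case: (itr F x y); rewrite ?mulr1 ?mulr0. all: by [].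
Qed.

Variables (k : nat) (i j : T).

Definition tterm (p : {set T * T} * T) : R :=
  W i p.2 * fweight W p.1 * ((itr p.1 i j)%:R - (itr p.1 p.2 j)%:R).

Lemma step1 : (laplacian W *m Qmx W k) i j =
  \sum_(p | forest p.1 && (#|p.1| == k)) tterm p.
Proof.
rewrite mxE.
have -> : \sum_l laplacian W i l * Qmx W k l j =
          \sum_l W i l * (Qmx W k i j - Qmx W k l j).
  have E1 : laplacian W i i = \sum_(l | l != i) W i l by rewrite mxE eqxx.
  have E3 : \sum_(l | l != i) laplacian W i l * Qmx W k l j =
            - \sum_(l | l != i) W i l * Qmx W k l j.
    rewrite -sumrN; apply: eq_bigr => l Hl; by rewrite mxE eq_sym (negbTE Hl) mulNr.
  rewrite (bigD1 i) //= [RHS](bigD1 i) //= subrr mulr0 add0r E1 E3.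
  have E4 : \sum_(l | l != i) W i l * (Qmx W k i j - Qmx W k l j) =
     \sum_(l | l != i) (W i l * Qmx W k i j - W i l * Qmx W k l j).
    by apply: eq_bigr => l _; rewrite mulrBr.
  by rewrite E4 sumrB mulr_suml.
rewrite (eq_bigr (fun l => \sum_(F | forest F && (#|F| == k)) tterm (F, l))); last first.
  move=> l _; rewrite !QmxE -sumrB mulr_sumr; apply: eq_bigr => F _.
  by rewrite /tterm /=; ring.
rewrite exchange_big pair_big /=; apply: eq_bigl => -[F l] /=; by rewrite andbT.
Qed.


Definition P1 (p : {set T * T} * T) := forest p.1 && (#|p.1| == k).
Definition cN (p : {set T * T} * T) := (W i p.2 != 0) && ~~ same_root p.1 i p.2.

Lemma step2 : \sum_(p | P1 p) tterm p =
  \sum_(p | P1 p && cN p && sink p.1 i) tterm p +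
  \sum_(p | P1 p && cN p && ~~ sink p.1 i) tterm p.
Proof.
rewrite (bigID cN) /= [X in _ + X]big1 ?addr0; first by rewrite (bigID (fun p => sink p.1 i)).
move=> [F l] /andP [_]; rewrite /cN /tterm /= negb_and negbK => /orP [/eqP ->|].
  by rewrite !mul0r.
by rewrite /same_root negbK => /forallP /(_ j) /eqP ->; rewrite subrr mulr0.
Qed.

Lemma Bsetup F l : forest F -> W i l != 0 -> ~~ same_root F i l -> ~~ sink F i ->
  let o := out F i in let H := F :\ (i, o) in
  [/\ forest H, sink H i, ~~ connect (e H) o i, ~~ connect (e H) l i &
      ((i, o) |: H = F /\ W i o != 0)].
Proof.
move=> fF Wl ns nsk o H.
have Hin : (i, o) \in F by apply: out_in.
have fH : forest H by exact: rem_forest.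
have sH : sink H i by exact: rem_sink fF Hin.
have ncH : ~~ connect (e H) o i by exact: rem_nc fF Hin.
have HK : (i, o) |: H = F by exact: rem_K Hin.
split => //; last by split => //; exact: rem_arc fF Hin.
apply/negP => Hc; move/negP: ns; apply; apply/forallP => j'.
rewrite -HK !(ext_itr fH sH ncH) Hc connect0 //.
Qed.

Definition phi0 (p : {set T * T} * T) : {set T * T} * T :=
  ((i, p.2) |: (p.1 :\ (i, out p.1 i)), out p.1 i).

Lemma zeroB : \sum_(p | P1 p && cN p && ~~ sink p.1 i) tterm p = 0.
Proof.
apply: (sum_invol (phi := phi0)).
- move=> [F l] /andP [/andP [/andP [fF /eqP cF] /andP [Wl ns]] nsk] /=.
  have [fH sH nco ncl [HK Wo]] := Bsetup fF Wl ns nsk.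
  set o := out F i in fH sH nco ncl HK Wo *; set H := F :\ (i, o) in fH sH nco ncl HK Wo *.
  rewrite /P1 /cN /phi0 /= -/o -/H.
  rewrite (ext_forest fH sH Wl ncl) ext_card // -cF -HK ext_card // eqxx Wo /=.
  apply/andP; split.
    apply/negP => /forallP sr; move/negP: ns; apply; apply/forallP => j'.
    move: (sr j'); rewrite -HK !(ext_itr fH sH nco) !(ext_itr fH sH ncl) connect0.
    by rewrite (negbTE nco) (negbTE ncl) eq_sym.
  by apply/sinkP => /(_ l); rewrite setU11.
- move=> [F l] /andP [/andP [/andP [fF /eqP cF] /andP [Wl ns]] nsk] /=.
  have [fH sH nco ncl [HK Wo]] := Bsetup fF Wl ns nsk.
  set o := out F i in fH sH nco ncl HK Wo *; set H := F :\ (i, o) in fH sH nco ncl HK Wo *.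
  rewrite /phi0 /= -/o -/H.
  have fF' := ext_forest fH sH Wl ncl.
  rewrite (out_spec fF' (setU11 _ _)) setU1K ?ext_notin //.
  by rewrite HK.
- move=> [F l] /andP [/andP [/andP [fF /eqP cF] /andP [Wl ns]] nsk] /=.
  have [fH sH nco ncl [HK Wo]] := Bsetup fF Wl ns nsk.
  set o := out F i in fH sH nco ncl HK Wo *; set H := F :\ (i, o) in fH sH nco ncl HK Wo *.
  rewrite /tterm /phi0 /= -/o -/H.
  simpl in HK.
  have wF : fweight W F = W i o * fweight W H by rewrite -HK ext_weight.
  have itF : forall v j', itr F v j' = if connect (e H) v i then itr H o j' else itr H v j'.
    by move=> v j'; rewrite -HK (ext_itr fH sH nco).
  rewrite wF !itF ext_weight //.
  rewrite !(ext_itr fH sH ncl) connect0 (negbTE nco) (negbTE ncl).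
  ring.
Qed.


Definition hA (G : {set T * T}) : {set T * T} * T := (G :\ (i, out G i), out G i).
Definition hA' (p : {set T * T} * T) : {set T * T} := (i, p.2) |: p.1.

Lemma stepA : \sum_(p | P1 p && cN p && sink p.1 i) tterm p =
  \sum_(G | forest G && (#|G| == k.+1)) fweight W G * ((i == j)%:R - (itr G i j)%:R).
Proof.
have -> : \sum_(G | forest G && (#|G| == k.+1)) fweight W G * ((i == j)%:R - (itr G i j)%:R)
   = \sum_(G | forest G && (#|G| == k.+1) && ~~ sink G i) fweight W G * ((i == j)%:R - (itr G i j)%:R).
  rewrite (bigID (fun G => sink G i)) /= big1 ?add0r //.
  by move=> G /andP [_ sG]; rewrite itr_sink // subrr mulr0.
rewrite (reindex_onto hA hA'); last first.
  move=> [F l] /andP [/andP [/andP [fF /eqP cF] /andP [Wl ns]] sF] /=.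
  have ncl := ns_nc fF sF ns.
  have fG := ext_forest fF sF Wl ncl.
  rewrite /hA /hA' /= (out_spec fG (setU11 _ _)) setU1K ?ext_notin //.
have Eq : forall G, (P1 (hA G) && cN (hA G) && sink (hA G).1 i && (hA' (hA G) == G)) =
   (forest G && (#|G| == k.+1) && ~~ sink G i).
  move=> G; apply/idP/idP.
    move=> /andP [/andP [/andP [/andP [fH /eqP cH] /andP [Wo ns]] sH] /eqP HK].
    move: HK fH cH Wo ns sH; rewrite /hA /hA' /=.
    set o := out G i; set H := G :\ (i, o) => HK fH cH Wo ns sH.
    have ncl := ns_nc fH sH ns.
    rewrite -HK (ext_forest fH sH Wo ncl) ext_card // cH eqxx /=.
    by apply/sinkP => /(_ o); rewrite setU11.
  move=> /andP [/andP [fG /eqP cG] nsG].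
  have Hin := out_in nsG.
  rewrite /hA /hA' /P1 /cN /= rem_K // eqxx andbT.
  rewrite (rem_forest _ _ fG) (rem_arc fG Hin) (rem_ns fG Hin) (rem_sink fG Hin) /=.
  by rewrite !andbT; move: cG; rewrite (cardsD1 (i, out G i)) Hin add1n => -[->].
apply: eq_big => // G; rewrite Eq => /andP [/andP [fG /eqP cG] nsG].
have Hin := out_in nsG.
set o := out G i in Hin *.
have fH : forest (G :\ (i, o)) by exact: rem_forest.
have sH := rem_sink fG Hin.
have nco := rem_nc fG Hin.
have HK := rem_K Hin.
rewrite /tterm /hA /= -/o.
have wG : fweight W G = W i o * fweight W (G :\ (i, o)) by rewrite -{1}HK ext_weight.
have itG : itr G i j = itr (G :\ (i, o)) o j by rewrite -{1}HK (ext_itr fH sH nco) connect0.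
rewrite wG itG itr_sink //.
Qed.

End Rec.

Section Rec2.
Variables (R : realFieldType) (n : nat) (W : 'M[R]_n).
Local Notation T := 'I_n.
Local Notation forest := (inforest W).
Local Notation itr := (@in_tree_rooted n).

Lemma recur k : Qmx W k.+1 = sigma W k.+1 *: 1%:M - laplacian W *m Qmx W k.
Proof.
apply/matrixP => i j.
have -> : (sigma W k.+1 *: 1%:M - laplacian W *m Qmx W k) i j =
  sigma W k.+1 * (i == j)%:R - (laplacian W *m Qmx W k) i j.
  rewrite mxE; congr (_ + _); last by rewrite mxE.
  by rewrite mxE mxE.
rewrite step1 step2 zeroB addr0 stepA QmxE /sigma.
rewrite mulr_suml -sumrB; apply: eq_bigr => G _; ring.
Qed.

End Rec2.

Section Alg.
Variables (R : realFieldType) (n : nat) (A r : 'M[R]_n).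
Hypotheses (hc : A *m r = r *m A) (hE : A *m r *m A = A).

Lemma alg_exists : is_group_inverse A (r *m A *m r).
Proof.
have f1 : A *m (r *m A *m r) = A *m r by rewrite !mulmxA hE.
have f2 : r *m A *m r *m A = A *m r by rewrite -(mulmxA r) -(mulmxA r) hE hc.
have f3 : r *m A *m r = A *m r *m r by rewrite hc.
split.
- by rewrite f1 hE.
- by rewrite f2 f3 !mulmxA hE.
- by rewrite f1 f2.
Qed.



Lemma alg_uniq X : is_group_inverse A X -> A *m X = A *m r.
Proof.
case=> h1 h2 h3.
have e1 : A *m r *m (A *m X) = A *m X by rewrite mulmxA hE.
have e2 : A *m r *m (A *m X) = A *m r.
  rewrite hc -mulmxA h3 [A *m (X *m A)]mulmxA h1 //.
by rewrite -e1 e2.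
Qed.

End Alg.

Section Final.
Variables (R : realFieldType) (n : nat) (W : 'M[R]_n).
Local Notation T := 'I_n.
Local Notation forest := (inforest W).
Local Notation itr := (@in_tree_rooted n).
Implicit Types (F G H : {set T * T}).

Lemma card_forest F : forest F -> (#|F| + ntrees F = n)%N.
Proof.
case/and3P => _ /forallP od _.
have E1 : #|F| = (\sum_v outdeg F v)%N.
  rewrite -sum1_card (partition_big fst predT) //=; apply: eq_bigr => v _.
  by rewrite /outdeg -sum1_card; apply: eq_bigl => a; rewrite inE.
have E2 : (\sum_v outdeg F v = #|[pred v | outdeg F v != 0%N]|)%N.
  rewrite -sum1_card [RHS]big_mkcond /=; apply: eq_bigr => v _; rewrite inE.
  by case: (outdeg F v) (od v) => [|[|]].
rewrite E1 E2 /ntrees addnC -[X in _ = X](card_ord n) -(cardC [pred v | outdeg F v == 0%N]).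
congr (_ + _)%N; first by apply: eq_card => v; rewrite !inE.
Qed.

Lemma sink0 v : outdeg (set0 : {set T * T}) v == 0%N.
Proof. by apply/sinkP => y; rewrite inE. Qed.

Lemma forest0 : forest set0.
Proof.
apply/and3P; split; first exact: sub0set.
  by apply/forallP => v; rewrite (eqP (sink0 v)).
by apply/forallP => a; rewrite inE.
Qed.

Lemma Q0 : Qmx W 0 = sigma W 0 *: 1%:M.
Proof.
apply/matrixP => i j; rewrite QmxE mxE mxE /sigma mulr_suml.
apply: eq_bigr => F /andP [_ /eqP cF].
have F0 : F = set0 by apply/eqP; rewrite -cards_eq0 cF.
by rewrite F0 itr_sink // sink0.
Qed.

Lemma commQ k : laplacian W *m Qmx W k = Qmx W k *m laplacian W.
Proof.
elim: k => [|k IH]; first by rewrite Q0 -scalemxAr -scalemxAl mulmx1 mul1mx.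
rewrite recur mulmxBr mulmxBl -scalemxAr -scalemxAl mulmx1 mul1mx.
by rewrite -mulmxA -IH mulmxA.
Qed.

Lemma bigmin_le (I : eqType) (s : seq I) (P : pred I) (f : I -> nat) x0 y :
  y \in s -> P y -> (\big[minn/x0]_(i <- s | P i) f i <= f y)%N.
Proof.
elim: s => [//|a s IH]; rewrite inE big_cons => /orP [/eqP <-|ys] Py.
  by rewrite Py geq_minl.
case: (P a); last exact: IH.
exact: leq_trans (geq_minr _ _) (IH ys Py).
Qed.

Lemma dim_le F : forest F -> (inforest_dim W <= ntrees F)%N.
Proof. by move=> fF; rewrite /inforest_dim; apply: bigmin_le; rewrite ?mem_index_enum. Qed.

Lemma dim_att : exists2 F, forest F & ntrees F = inforest_dim W.
Proof.
have : (inforest_dim W == n) || [exists F, forest F && (ntrees F == inforest_dim W)].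
  rewrite /inforest_dim; apply: (big_ind (fun x => (x == n) || [exists F, forest F && (ntrees F == x)])).
  - by rewrite eqxx.
  - move=> x y Hx Hy; case: (leqP x y) => Hxy.
      exact: Hx.
    exact: Hy.
  - by move=> F fF; apply/orP; right; apply/existsP; exists F; rewrite fF eqxx.
case/orP => [/eqP Hd|/existsP [F /andP [fF /eqP HF]]]; last by exists F.
exists set0; first exact: forest0.
rewrite Hd /ntrees -[RHS](card_ord n); apply: eq_card => v; by rewrite inE sink0.
Qed.

End Final.

End Aux.
Import Aux.

Theorem proposition14 (R : realFieldType) (n : nat) (W : 'M[R]_n)
  (Hn : (1 < n)%N)
  (Hloop : forall i, W i i = 0)
  (Hnonneg : forall i j, 0 <= W i j) :
  let L := laplacian W in
  let d := inforest_dim W in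
  let Jt := (sigma W (n - d))^-1 *: Qmx W (n - d) in
  (exists X, is_group_inverse L X) /\
  (forall X, is_group_inverse L X -> Jt = 1%:M - L *m X).
Proof.
Import Order.TTheory.
move=> L d Jt.
have [F0 fF0 hF0] := @dim_att R n W.
have cF0 : #|F0| = (n - d)%N.
  have := card_forest fF0; rewrite hF0; lia.
have nsig : forall F, inforest W F -> (#|F| <= n - d)%N.
  move=> F fF; have := card_forest fF; have := dim_le fF.
  lia.
rewrite /Jt; set m := (n - d)%N in cF0 nsig *.
have sig_pos : 0 < sigma W m.
  rewrite /sigma (bigD1 F0) /=; last by rewrite fF0 cF0 eqxx.
  have h1 : 0 < fweight W F0.
    rewrite /fweight; apply: prodr_gt0 => -[x y] Hxy /=.
    by rewrite lt_def (forest_arc fF0 Hxy) Hnonneg.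
  have h2 : 0 <= \sum_(F | (inforest W F && (#|F| == m)) && (F != F0)) fweight W F.
    by apply: sumr_ge0 => F _; apply: prodr_ge0 => a _; apply: Hnonneg.
  by apply: (lt_le_trans h1); rewrite lerDl h2.
have sig0 : sigma W m.+1 = 0.
  rewrite /sigma big_pred0 // => F; apply/negbTE/andP => -[fF /eqP cF].
  by have := nsig F fF; rewrite cF ltnn.
have Qm1 : Qmx W m.+1 = 0.
  apply/matrixP => i j; rewrite QmxE mxE big_pred0 // => F.
  apply/negbTE/andP => -[fF /eqP cF].
  by have := nsig F fF; rewrite cF ltnn.
have LQ : L *m Qmx W m = 0.
  have := recur W m; rewrite Qm1 sig0 scale0r sub0r => /eqP.
  by rewrite eq_sym oppr_eq0 => /eqP.
pose S := if m is k.+1 then Qmx W k else 0.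
have key : forall m', let S' := (if m' is k.+1 then Qmx W k else 0) in
    Qmx W m' = sigma W m' *: 1%:M - L *m S' /\ L *m S' = S' *m L.
  case=> [|k] /=.
    by rewrite Q0 mulmx0 subr0 mul0mx.
  by rewrite recur commQ.
have [QS hS] := key m.
have sn0 : sigma W m != 0 by rewrite gt_eqF.
pose r := (sigma W m)^-1 *: S.
have hc : L *m r = r *m L by rewrite /r -scalemxAr -scalemxAl hS.
have hJ : (sigma W m)^-1 *: Qmx W m = 1%:M - L *m r.
  by rewrite QS scalerBr scalerA mulVf // scale1r /r -scalemxAr.
have hE : L *m r *m L = L.
  have h0 : L *m ((sigma W m)^-1 *: Qmx W m) = 0 by rewrite -scalemxAr LQ scaler0.
  move: h0; rewrite hJ mulmxBr mulmx1 => /eqP; rewrite subr_eq0 => /eqP h0.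
  by rewrite -mulmxA -hc -h0.
split; first by exists (r *m L *m r); exact: alg_exists hc hE.
by move=> X hX; rewrite hJ (alg_uniq hc hE hX).
Qed.
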